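(* Let $R=[0,1]^2$, $s\in\mathbb{N}$ and $u=2^{-s}$. If $u\le\frac12$, then the $4$-dimensional volume of the union $\mathcal{B}_{close}$ of all close box pairs satisfies $\mathrm{vol}(\mathcal{B}_{close})\le4\pi u$.
   Context: For $p,q\in\mathbb{R}^2$ write $p\le q$ if both coordinates satisfy $\le$. $R$ is split into $2^s\times2^s$ congruent closed squares (''boxes'') of side length $u$. A box pair is an ordered pair $(B_1,B_2)$ of boxes, viewed as the subset $B_1\times B_2\subset\mathbb{R}^4$; let $c_1,c_2$ be the centers of $B_1,B_2$. A box pair is close if $c_1\le c_2$ and $\|c_1-c_2\|_2<\sqrt u$. $\mathrm{vol}$ denotes $4$-dimensional Lebesgue measure. *)

(* Defs.v *)
From HB Require Import structures.
From mathcomp Require Import all_boot all_order all_algebra.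
From mathcomp Require Import all_classical all_reals all_analysis.
Unset Printing Implicit Defensive.
Import Order.TTheory GRing.Theory Num.Theory.
Local Open Scope classical_set_scope.
Local Open Scope ring_scope.

Definition vol4 (R : realType) :=
  (((@lebesgue_measure R) \x (@lebesgue_measure R)) \x
   ((@lebesgue_measure R) \x (@lebesgue_measure R)))%E.

Definition side (R : realType) (s : nat) : R := (2 ^+ s)^-1.

Definition box (R : realType) (s i j : nat) : set (R * R) :=
  [set p | i%:R * side R s <= p.1 <= i.+1%:R * side R s /\
           j%:R * side R s <= p.2 <= j.+1%:R * side R s].

Definition center (R : realType) (s i j : nat) : R * R :=
  ((i%:R + 2^-1) * side R s, (j%:R + 2^-1) * side R s).

Definition le2 (R : realType) (p q : R * R) : Prop := p.1 <= q.1 /\ p.2 <= q.2.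

Definition dist2 (R : realType) (p q : R * R) : R :=
  Num.sqrt ((q.1 - p.1) ^+ 2 + (q.2 - p.2) ^+ 2).

Definition close_pair (R : realType) (s i1 j1 i2 j2 : nat) : Prop :=
  le2 R (center R s i1 j1) (center R s i2 j2) /\
  dist2 R (center R s i1 j1) (center R s i2 j2) < Num.sqrt (side R s).

Definition B_close (R : realType) (s : nat) : set ((R * R) * (R * R)) :=
  [set x | exists i1 j1 i2 j2 : nat,
     [/\ (i1 < 2 ^ s)%N /\ (j1 < 2 ^ s)%N, (i2 < 2 ^ s)%N /\ (j2 < 2 ^ s)%N,
         close_pair R s i1 j1 i2 j2 & box R s i1 j1 x.1 /\ box R s i2 j2 x.2]].

(* Main.v *)
Require Import Defs.
From HB Require Import structures.
From mathcomp Require Import all_boot all_order all_algebra.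
From mathcomp Require Import all_classical all_reals all_analysis.
From mathcomp Require Import ring lra zify.
From mathcomp Require Import measurable_realfun.
Import Order.TTheory GRing.Theory Num.Theory.
Local Open Scope classical_set_scope.
Local Open Scope ring_scope.

Lemma my_pmE d1 d2 (T1 : measurableType d1) (T2 : measurableType d2)
  (R : realType) (m1 : {measure set T1 -> \bar R})
  (m2 : {measure set T2 -> \bar R}) (A1 : set T1) (A2 : set T2) :
  measurable A1 -> (m1 \x m2)%E (A1 `*` A2) = (m1 A1 * m2 A2)%E.
Proof.
move=> mA1 /=; rewrite /product_measure1 /=.
rewrite (eq_integral (fun x => (\1_A1 x)%:E * m2 A2)%E); last first.
  by move=> x _; rewrite indicE; have [xA1|xA1] /= := boolP (x \in A1);
    [rewrite in_xsectionX// mul1e|rewrite mul0e notin_xsectionX ?measure0].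
rewrite ge0_integralZr ?integral_indic ?setIT//.
by apply/measurable_EFinP; apply: measurable_indic.
Qed.

Lemma my_pm_sigma_finite d1 d2 (T1 : measurableType d1) (T2 : measurableType d2)
  (R : realType) (m1 : {sigma_finite_measure set T1 -> \bar R})
  (m2 : {sigma_finite_measure set T2 -> \bar R}) :
  sigma_finite setT (m1 \x m2)%E.
Proof.
have /sigma_finiteP[F [TF ndF Foo]] := sigma_finiteT m1.
have /sigma_finiteP[G [TG ndG Goo]] := sigma_finiteT m2.
exists (fun n => F n `*` G n).
 rewrite -setXTT TF TG predeqE => -[x y]; split.
    move=> [/= [n _ Fnx] [k _ Gky]]; exists (maxn n k) => //; split.
    - by move: x Fnx; exact/subsetPset/ndF/leq_maxl.
    - by move: y Gky; exact/subsetPset/ndG/leq_maxr.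
  by move=> [n _ []/= ? ?]; split; exists n.
move=> k; have [? ?] := Foo k; have [? ?] := Goo k.
split; first exact: measurableX.
by rewrite product_measure1E// lte_mul_pinfty// ge0_fin_numE.
Qed.

Definition leb2 (R : realType) :=
  HB.pack_for (SigmaFiniteMeasure.type _ R) (@lebesgue_measure R \x @lebesgue_measure R)%E
   (Measure_isSigmaFinite.Build _ _ _ (@lebesgue_measure R \x @lebesgue_measure R)%E
     (@my_pm_sigma_finite _ _ _ _ R (@lebesgue_measure R) (@lebesgue_measure R))).
Lemma vol4E (R : realType) : vol4 R = ((@lebesgue_measure R \x @lebesgue_measure R) \x leb2 R)%E.
Proof. by []. Qed.
Section Boxes.
Variable R : realType.

Lemma side_gt0 s : 0 < side R s.
Proof. by rewrite /side invr_gt0 exprn_gt0. Qed.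

Lemma boxE s i j : box R s i j =
  `[i%:R * side R s, i.+1%:R * side R s]%classic `*`
  `[j%:R * side R s, j.+1%:R * side R s]%classic.
Proof.
by apply/seteqP; split => -[x y] /=; rewrite !in_itv /=.
Qed.

Lemma box_measurable s i j : measurable (box R s i j).
Proof. by rewrite boxE; apply: measurableX; apply: measurable_itv. Qed.

Lemma leb_itv (a b : R) : a <= b -> lebesgue_measure (`[a, b]%classic : set R) = (b - a)%:E.
Proof.
move=> ab; rewrite lebesgue_measure_itv /=.
rewrite lte_fin; case: (ltP a b) => [_|ba]; first by rewrite -EFinD.
have -> : b = a by apply/eqP; rewrite eq_le ab ba.
by rewrite subrr.
Qed.

Lemma box_measure s i j :
  (lebesgue_measure \x lebesgue_measure)%E (box R s i j) = (side R s ^+ 2)%:E.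
Proof.
rewrite boxE product_measure1E; try exact: measurable_itv.
have hu := side_gt0 s.
set u := side R s.
transitivity ((i.+1%:R * u - i%:R * u)%:E * (j.+1%:R*u - j%:R*u)%:E)%E.
  by congr (_ * _)%E; apply: leb_itv; rewrite ler_pM2r // ler_nat.
by rewrite -EFinM; congr (_%:E); rewrite -!natr1; ring.
Qed.

Lemma pair_measure s i1 j1 i2 j2 :
  vol4 R (box R s i1 j1 `*` box R s i2 j2) = (side R s ^+ 4)%:E.
Proof.
transitivity (((lebesgue_measure \x lebesgue_measure) (box R s i1 j1)) *
   ((lebesgue_measure \x lebesgue_measure) (box R s i2 j2)))%E.
  by apply: my_pmE; apply: box_measurable.
by rewrite !box_measure -EFinM -exprD.
Qed.
End Boxes.

Lemma big_setU_mu d (T : measurableType d) (R : realType)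
  (mu : {measure set T -> \bar R}) (I : Type) (r : seq I) (F : I -> set T) :
  (forall i, measurable (F i)) ->
  measurable (\big[setU/set0]_(i <- r) F i) /\
  (mu (\big[setU/set0]_(i <- r) F i) <= \sum_(i <- r) mu (F i))%E.
Proof.
move=> mF; apply: (big_ind2 (fun X v => measurable X /\ (mu X <= v)%E)).
- by split; [exact: measurable0 | rewrite measure0].
- move=> X1 v1 X2 v2 [m1 h1] [m2 h2]; split; first exact: measurableU.
  apply: le_trans (measureU2 mu m1 m2) _; exact: leeD.
- by move=> i _; split.
Qed.

Lemma in_bigU (T : Type) (I : eqType) (r : seq I) (F : I -> set T) x :
  (\big[setU/set0]_(i <- r) F i) x <-> exists2 i, i \in r & F i x.
Proof.
elim: r => [|a r IH].
  by rewrite big_nil; split => [[]|[i]]; rewrite in_nil.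
rewrite big_cons; split.
- case=> [Fa|/IH [i ir Fi]]; first by exists a; rewrite ?mem_head.
  by exists i; rewrite // in_cons ir orbT.
- case=> i; rewrite in_cons => /orP [/eqP -> Fi | ir Fi]; first by left.
  by right; apply/IH; exists i.
Qed.

Lemma sq_lt_k (s a : nat) : (a ^ 2 < 2 ^ s)%N -> (a < 2 ^ uphalf s)%N.
Proof.
move=> h; rewrite ltnNge; apply/negP => hk.
have e : (2 ^ uphalf s * 2 ^ uphalf s = 2 ^ (odd s + s))%N.
  by rewrite -expnD addnn uphalfK.
have h2 : (2 ^ s <= 2 ^ (odd s + s))%N by rewrite expnD leq_pmull // expn_gt0.
have h3 := leq_mul hk hk.
move: h; rewrite -mulnn ltnNge => /negP; apply.
by apply: leq_trans h2 _; rewrite -e.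
Qed.

Section Close.
Variable R : realType.

Lemma key_ineq s (a b : R) :
  (a * side R s) ^+ 2 + (b * side R s) ^+ 2 < side R s -> a ^+ 2 < 2 ^+ s.
Proof.
move=> h; set u := side R s in h *.
have hu : 0 < u := side_gt0 R s.
have hN : 0 < (2:R) ^+ s by rewrite exprn_gt0.
have uN : u * 2 ^+ s = 1 by rewrite /u /side mulVf // gt_eqF.
have h1 : a ^+ 2 * u * u < 1 * u.
  rewrite mul1r; apply: le_lt_trans h.
  have -> : a ^+ 2 * u * u = (a * u) ^+ 2 by ring.
  by rewrite lerDl sqr_ge0.
rewrite ltr_pM2r // in h1.
have : a ^+ 2 * u * 2 ^+ s < 1 * 2 ^+ s by rewrite ltr_pM2r.
by rewrite -mulrA uN mulr1 mul1r.
Qed.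

Lemma close_nat s i1 j1 i2 j2 : close_pair R s i1 j1 i2 j2 ->
  [/\ (i1 <= i2)%N, (j1 <= j2)%N, ((i2 - i1) ^ 2 < 2 ^ s)%N &
      ((j2 - j1) ^ 2 < 2 ^ s)%N].
Proof.
rewrite /close_pair /le2 /dist2 /Defs.center /=.
have hu := side_gt0 R s.
move=> [[h1 h2] hd].
have l1 : (i1 <= i2)%N by rewrite -(ler_nat R); move: h1; rewrite ler_pM2r // lerD2r.
have l2 : (j1 <= j2)%N by rewrite -(ler_nat R); move: h2; rewrite ler_pM2r // lerD2r.
have e1 : (i2%:R + 2^-1) * side R s - (i1%:R + 2^-1) * side R s
    = (i2 - i1)%N%:R * side R s :> R by rewrite natrB //; ring.
have e2 : (j2%:R + 2^-1) * side R s - (j1%:R + 2^-1) * side R s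
    = (j2 - j1)%N%:R * side R s :> R by rewrite natrB //; ring.
move: hd; rewrite ltr_sqrt // e1 e2 => hd.
split => //; rewrite -(ltr_nat R) !natrX.
- exact: key_ineq hd.
- by apply: key_ineq; rewrite addrC; exact: hd.
Qed.
End Close.

Theorem lemma4 (R : realType) (s : nat) :
  side R s <= 2^-1 ->
  (vol4 R (B_close R s) <= (4 * pi * side R s)%:E)%E.
Proof.
move=> _.
pose n := (2 ^ s)%N.
pose k := (2 ^ uphalf s)%N.
pose P (t : ('I_n * 'I_n * 'I_k * 'I_k)%type) :=
  (t.1.1.1 + t.1.2 < n)%N /\ (t.1.1.2 + t.2 < n)%N /\
  close_pair R s t.1.1.1 t.1.1.2 (t.1.1.1 + t.1.2)%N (t.1.1.2 + t.2)%N.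
pose F (t : ('I_n * 'I_n * 'I_k * 'I_k)%type) : set ((R * R) * (R * R)) :=
  [set x | P t /\ box R s t.1.1.1 t.1.1.2 x.1 /\
                  box R s (t.1.1.1 + t.1.2)%N (t.1.1.2 + t.2)%N x.2].
have hu := side_gt0 R s.
have mF t : measurable (F t) /\ (vol4 R (F t) <= (side R s ^+ 4)%:E)%E.
  have [Pt|nPt] := pselect (P t).
    have -> : F t = box R s t.1.1.1 t.1.1.2 `*`
                    box R s (t.1.1.1 + t.1.2)%N (t.1.1.2 + t.2)%N.
      by apply/seteqP; split => x /=; [case=> _ // | move=> h; split].
    split; first by apply: measurableX; apply: box_measurable.
    by rewrite pair_measure.
  have -> : F t = set0 by apply/seteqP; split => x // [].
  split; first exact: measurable0.
  by rewrite vol4E measure0 lee_fin exprn_ge0 // ltW.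
have BE : B_close R s = \big[setU/set0]_(t <- index_enum {: ('I_n * 'I_n * 'I_k * 'I_k)%type}) F t.
  apply/seteqP; split => x.
    move=> [i1 [j1 [i2 [j2 [[hi1 hj1] [hi2 hj2] hc [b1 b2]]]]]].
    have [l1 l2 q1 q2] := @close_nat R _ _ _ _ _ hc.
    apply/in_bigU.
    exists ((@Ordinal n i1 hi1, @Ordinal n j1 hj1, @Ordinal k _ (@sq_lt_k s _ q1)),
            @Ordinal k _ (@sq_lt_k s _ q2)); first by rewrite mem_index_enum.
    by rewrite /F /P /= !subnKC.
  move=> /in_bigU [t _ [[h1 [h2 hc]] [b1 b2]]].
  exists t.1.1.1, t.1.1.2, (t.1.1.1 + t.1.2)%N, (t.1.1.2 + t.2)%N.
  by split => //; split => //; apply: ltn_ord.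
have [mU leU] := @big_setU_mu _ _ R ((@lebesgue_measure R \x @lebesgue_measure R) \x leb2 R)%E
   _ (index_enum {: ('I_n * 'I_n * 'I_k * 'I_k)%type}) F (fun t => (mF t).1).
rewrite BE vol4E; apply: le_trans leU _.
apply: (@le_trans _ _ (\sum_(t : ('I_n * 'I_n * 'I_k * 'I_k)%type) (side R s ^+ 4)%:E)%E).
  by apply: lee_sum => t _; exact: (mF t).2.
rewrite sumEFin sumr_const card_prod card_prod card_prod !card_ord lee_fin.
have kk : (k * k <= 2 * 2 ^ s)%N.
  rewrite /k -expnD addnn uphalfK expnD leq_mul2r.
  by case: (odd s); rewrite ?orbT.
have kkR : (k%:R * k%:R : R) <= 2 * 2 ^+ s.
  by move: kk; rewrite -(ler_nat R) !natrM natrX.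
set u := side R s in hu *.
set N := (2:R) ^+ s in kkR *.
have uN : u * N = 1 by rewrite /u /side mulVf // gt_eqF // exprn_gt0.
rewrite -[leLHS]mulr_natr !natrM /n natrX -/N.
have -> : u ^+ 4 * (N * N * k%:R * k%:R) = (u * N) ^+ 2 * (u * u * (k%:R * k%:R)) by ring.
rewrite uN expr1n mul1r.
apply: (@le_trans _ _ (u * u * (2 * N))).
  by rewrite ler_wpM2l // mulr_ge0 // ltW.
have -> : u * u * (2 * N) = 2 * u * (u * N) by ring.
rewrite uN mulr1.
have := pi_ge2 R; nra.
Qed.
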